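(* Let $l=m_5(e_3+e_4+e_5)+m_6e_6+m_7e_7+m_8e_8$ with $m_5,\dots,m_8\in\mathbb Z$ and $m_5+m_6+m_7+m_8$ even (these are exactly the vectors of $E_8$ orthogonal to $L_2=\langle e_2+e_1,e_2-e_1,e_4-e_3,e_5-e_4\rangle_\mathbb Z\cong 2A_1\oplus A_2$). Then $l$ is orthogonal to exactly $10$ roots of $E_8$ if and only if (i) $m_j\ne0$ for every $j\in\{5,6,7,8\}$ and $m_i\ne\pm m_j$ for all $5\le i<j\le8$, and (ii) $km_5\ne\pm m_6\pm m_7\pm m_8$ for $k\in\{1,3\}$ and every choice of signs. Moreover, $l$ is orthogonal to exactly $14$ roots of $E_8$ if (i) holds, (ii) holds for $k=1$, and there is exactly one relation of the form $3m_5=\pm m_6\pm m_7\pm m_8$ (exactly one choice of signs).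
   Context: $e_1,\dots,e_8$ is an orthonormal basis of $\mathbb R^8$ and $E_8=\{x\in\mathbb Z^8\cup(\mathbb Z+\tfrac12)^8\mid \sum_i x_i\in2\mathbb Z\}$; its roots (vectors of square $2$) are the $112$ vectors $\pm e_i\pm e_j$ ($i<j$) and the $128$ vectors $\frac12\sum_{i=1}^8(-1)^{\nu_i}e_i$ with $\sum\nu_i$ even. *)

(* Defs.v *)
From mathcomp Require Import all_boot all_order all_algebra.
Set Implicit Arguments. Unset Strict Implicit. Unset Printing Implicit Defensive.
Import Order.TTheory GRing.Theory Num.Theory.
Local Open Scope ring_scope.

(* Vectors of R^8 with rational coordinates, in the basis e_1,...,e_8
   (index i : 'I_8 corresponds to e_(i+1)). *)
Definition vec8 := 'I_8 -> rat.

Definition dot8 (x y : vec8) : rat := \sum_(i < 8) x i * y i.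

Definition in_E8 (x : vec8) : bool :=
  ([forall i, x i \is a Num.int] || [forall i, (x i - 2^-1) \is a Num.int])
  && ((\sum_(i < 8) x i) / 2 \is a Num.int).

Definition is_E8_root (x : vec8) : bool := in_E8 x && (dot8 x x == 2).

(* Every root has coordinates in {-1,-1/2,0,1/2,1} (since |x_i|^2 <= 2 and
   x_i in (1/2)Z), so all roots are of the form decode y below for
   y : {ffun 'I_8 -> 'I_5}, and decode is injective. *)
Definition decode (y : {ffun 'I_8 -> 'I_5}) : vec8 :=
  fun i => (((y i : nat)%:Z - 2)%:~R) / 2.

Definition num_orth_roots (l : vec8) : nat :=
  #|[set y : {ffun 'I_8 -> 'I_5} | is_E8_root (decode y) && (dot8 (decode y) l == 0)]|.

Definition lvec (m5 m6 m7 m8 : int) : vec8 :=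
  fun i => match val i with
           | 2 | 3 | 4 => m5%:~R
           | 5 => m6%:~R
           | 6 => m7%:~R
           | 7 => m8%:~R
           | _ => 0
           end.

Definition sgnb (b : bool) : int := (-1) ^+ b.

Definition cond_i (m5 m6 m7 m8 : int) : Prop :=
  [&& m5 != 0, m6 != 0, m7 != 0, m8 != 0,
      (m5 != m6) && (m5 != - m6), (m5 != m7) && (m5 != - m7),
      (m5 != m8) && (m5 != - m8), (m6 != m7) && (m6 != - m7),
      (m6 != m8) && (m6 != - m8) & (m7 != m8) && (m7 != - m8)].

Definition sign_rel (k : int) (m5 m6 m7 m8 : int) (s : bool * bool * bool) : bool :=
  k * m5 == sgnb s.1.1 * m6 + sgnb s.1.2 * m7 + sgnb s.2 * m8.

Definition cond_ii (k : int) (m5 m6 m7 m8 : int) : Prop :=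
  forall s : bool * bool * bool, ~~ sign_rel k m5 m6 m7 m8 s.

(* Main.v *)
Require Import Defs.
From mathcomp Require Import all_boot all_order all_algebra.
From mathcomp Require Import zify ring lra.
Import Order.TTheory GRing.Theory Num.Theory.
Local Open Scope ring_scope.

Lemma intq (q : rat) (z d : int) : d != 0 -> q * d%:~R = z%:~R -> (q \is a Num.int) = (d %| z)%Z.
Proof.
move=> d0 E; apply/intrP/dvdzP => [[k Hk]|[k Hk]]; exists k.
- by apply/eqP; rewrite -(eqr_int rat) -E Hk intrM.
- by apply: (mulIf (_ : d%:~R != 0)); rewrite ?intr_eq0 // E Hk intrM.
Qed.

Lemma big8 (V : nmodType) (F : 'I_8 -> V) :
  \sum_(i < 8) F i = \sum_(k <- iota 0 8) F (inord k).
Proof.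
by rewrite -/(index_iota 0 8) big_mkord; apply: eq_bigr => i _; rewrite inord_val.
Qed.

Lemma forall8 (P : pred 'I_8) : [forall i, P i] = all (fun k => P (inord k)) (iota 0 8).
Proof.
apply/forallP/allP => H i.
- by move=> _; apply: H.
- by rewrite -(inord_val i); apply: H; rewrite mem_iota ltn_ord.
Qed.

Definition key4 := (int * int * int * int)%type.
Definition cz (v : nat -> nat) (k : nat) : int := (v k)%:Z - 2.
Definition cl v := map (cz v) (iota 0 8).
Definition sumZ (s : seq int) := foldr +%R 0 s.
Definition rootbV v := let c := cl v in
  [&& (all (fun z => (2 %| z)%Z) c || all (fun z => (2 %| z - 1)%Z) c),
      (4 %| sumZ c)%Z & (sumZ (map (fun z => z*z) c) == 8)].
Definition keyV v : key4 := (cz v 2 + cz v 3 + cz v 4, cz v 5, cz v 6, cz v 7).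
Definition Pm (m5 m6 m7 m8 : int) (t : key4) : bool :=
  t.1.1.1 * m5 + t.1.1.2 * m6 + t.1.2 * m7 + t.2 * m8 == 0.
Definition vy (y : {ffun 'I_8 -> 'I_5}) : nat -> nat := fun k => nat_of_ord (y (inord k)).

Lemma sumZE s : sumZ s = \sum_(z <- s) z.
Proof. by elim: s => [|a s IH]; rewrite ?big_nil ?big_cons //= IH. Qed.

Lemma sum_intr (I : Type) (s : seq I) (f : I -> int) :
  (\sum_(i <- s) f i)%:~R = \sum_(i <- s) (f i)%:~R :> rat.
Proof. by elim: s => [|a s IH]; rewrite ?big_nil ?big_cons // intrD IH. Qed.

Lemma decodeE y k : decode y (inord k) = (cz (vy y) k)%:~R / 2.
Proof. by []. Qed.

Lemma root_eq y : is_E8_root (decode y) = rootbV (vy y).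
Proof.
rewrite /is_E8_root /in_E8 /rootbV /cl !forall8 !all_map -andbA.
congr [&& _, _ & _].
- congr (_ || _); apply: eq_all => k /=; rewrite decodeE.
  + by apply: intq => //; rewrite mulfVK.
  + move: (cz (vy y) k) => c; apply: intq => //; by rewrite intrB; field.
- apply: intq => //; rewrite big8 sumZE big_map.
  rewrite (eq_bigr (fun k => (cz (vy y) k)%:~R / 2)) ?sum_intr -?mulr_suml; last by move=> k _; rewrite decodeE.
  by field.
- rewrite /dot8 big8 sumZE big_map big_map.
  rewrite (eq_bigr (fun k => (cz (vy y) k * cz (vy y) k)%:~R / 4)); last first.
    by move=> k _; rewrite decodeE intrM; field.
  rewrite -mulr_suml -sum_intr.
  apply/eqP/eqP => [H|->].
  + apply/eqP; rewrite -(eqr_int rat) -[X in X == _](divfK (_ : 4 != 0)) // H.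
    by apply/eqP; rewrite pmulrn; ring.
  + by rewrite pmulrn; field.
Qed.

Lemma lvecE m5 m6 m7 m8 k : (k < 8)%N ->
  lvec m5 m6 m7 m8 (inord k) = (nth 0 [:: 0; 0; m5; m5; m5; m6; m7; m8] k)%:~R.
Proof. by move=> hk; rewrite /lvec /= inordK //; case: k hk => [|[|[|[|[|[|[|[|]]]]]]]]. Qed.

Lemma div2_eq0 (q : rat) : (q / 2 == 0) = (q == 0).
Proof. by rewrite mulf_eq0 invr_eq0 orbF. Qed.

Lemma dot_eq y m5 m6 m7 m8 :
  (dot8 (decode y) (lvec m5 m6 m7 m8) == 0) = Pm m5 m6 m7 m8 (keyV (vy y)).
Proof.
rewrite /dot8 big8.
rewrite (eq_big_seq (fun k => ((cz (vy y) k) * nth 0 [:: 0; 0; m5; m5; m5; m6; m7; m8] k)%:~R / 2)); last first.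
  by move=> k; rewrite mem_iota => /andP[_ hk]; rewrite decodeE lvecE // intrM; field.
rewrite -mulr_suml -sum_intr div2_eq0 intr_eq0 /Pm /keyV /= !big_cons big_nil.
congr (_ == 0); cbn [nth]; ring.
Qed.

Fixpoint lists n : seq (seq nat) :=
  if n is n'.+1 then [seq x :: l | x <- iota 0 5, l <- lists n'] else [:: [::]].
Definition hl (l : seq nat) : {ffun 'I_8 -> 'I_5} := [ffun i : 'I_8 => inord (nth 0%N l (nat_of_ord i))].

Lemma mem_lists n l : (l \in lists n) = (size l == n) && all (fun x => (x < 5)%N) l.
Proof.
elim: n l => [|n IH] l.
  by case: l => [|x l]; rewrite ?inE.
apply/allpairsP/idP => [[[x lp] [Hx Hl ->]]|].
  move: Hx; rewrite mem_iota /= => Hx.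
  by move: Hl; rewrite /= IH => /andP[/eqP -> ->]; rewrite /= eqxx Hx.
case: l => [|x l] //= /andP[Hs /andP[Hx Hl]].
exists (x, l); split => //; first by move: Hx; case: x => [|[|[|[|[|]]]]].
by rewrite -/(lists n) IH -eqSS Hs Hl.
Qed.

Lemma uniq_lists n : uniq (lists n).
Proof.
elim: n => [//|n IH]; change (uniq [seq x :: l | x <- iota 0 5, l <- lists n]).
apply: allpairs_uniq => //.
by move=> [x1 l1] [x2 l2] _ _ /= [-> ->].
Qed.

Lemma sum_ffun (G : (nat -> nat) -> nat) :
  (forall v w, (forall k, (k < 8)%N -> v k = w k) -> G v = G w) ->
  \sum_(y : {ffun 'I_8 -> 'I_5}) G (vy y) = \sum_(l <- lists 8) G (fun k => nth 0%N l k).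
Proof.
move=> Gext.
have Lok l : l \in lists 8 -> forall k, (k < 8)%N -> vy (hl l) k = nth 0%N l k.
  move=> Hl k hk; rewrite mem_lists in Hl; case/andP: Hl => /eqP Hs Ha.
  rewrite /vy /hl ffunE (inordK hk) inordK //; apply: (allP Ha); apply: mem_nth.
  by rewrite Hs.
have perm : perm_eq (index_enum {ffun 'I_8 -> 'I_5}) (map hl (lists 8)).
  apply: uniq_perm; first exact: index_enum_uniq.
  - rewrite map_inj_in_uniq ?uniq_lists // => l1 l2 H1 H2 E.
    have S1 : size l1 = 8 by move: H1; rewrite mem_lists => /andP[/eqP].
    have S2 : size l2 = 8 by move: H2; rewrite mem_lists => /andP[/eqP].
    apply: (@eq_from_nth _ 0%N); first by rewrite S1 S2.
    by move=> k; rewrite S1 => hk; rewrite -(Lok l1) // -(Lok l2) // E.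
  - move=> y; rewrite mem_index_enum; symmetry; apply/mapP.
    exists [seq vy y k | k <- iota 0 8].
    + rewrite mem_lists size_map size_iota eqxx andTb; apply/allP => x /mapP [k _ ->].
      exact: ltn_ord.
    + apply/ffunP => i; rewrite /hl ffunE (nth_map 0%N) ?size_iota // nth_iota //.
      by rewrite add0n /vy !inord_val.
by rewrite (perm_big _ perm) big_map; apply: eq_big_seq => l Hl; apply: Gext => k hk; exact: Lok.
Qed.

Fixpoint gen (n : nat) (pre : seq nat) : seq key4 :=
  if n is n'.+1 then flatten (map (fun x => gen n' (pre ++ [:: x])) (iota 0 5))
  else if rootbV (fun k => nth 0%N pre k) then [:: keyV (fun k => nth 0%N pre k)] else [::].

Lemma gen_sum m5 m6 m7 m8 n pre :
  (\sum_(l <- lists n) (rootbV (fun k => nth 0%N (pre ++ l) k) &&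
      Pm m5 m6 m7 m8 (keyV (fun k => nth 0%N (pre ++ l) k)) : nat))%N =
  (\sum_(t <- gen n pre) (Pm m5 m6 m7 m8 t : nat))%N.
Proof.
elim: n pre => [|n IH] pre.
  rewrite /= big_seq1 cats0; case: rootbV => //=.
  by rewrite big_seq1.
  by rewrite big_nil.
rewrite (_ : lists n.+1 = [seq x :: l | x <- iota 0 5, l <- lists n]) //.
rewrite (_ : gen n.+1 pre = flatten (map (fun x => gen n (pre ++ [:: x])) (iota 0 5))) //.
rewrite big_allpairs_dep big_flatten big_map.
apply: eq_bigr => x _; rewrite -IH; apply: eq_bigr => l _.
by rewrite -catA.
Qed.

Lemma count_eq m5 m6 m7 m8 :
  num_orth_roots (lvec m5 m6 m7 m8) = (\sum_(t <- gen 8 [::]) (Pm m5 m6 m7 m8 t : nat))%N.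
Proof.
rewrite /num_orth_roots -sum1_card big_mkcond.
rewrite (eq_bigr (fun y => (rootbV (vy y) && Pm m5 m6 m7 m8 (keyV (vy y)) : nat))); last first.
  by move=> y _; rewrite inE root_eq dot_eq; case: (_ && _).
rewrite (sum_ffun (fun v => (rootbV v && Pm m5 m6 m7 m8 (keyV v) : nat))); last first.
  move=> v w H.
  have Hc : cl v = cl w.
    by apply/eq_in_map => k; rewrite mem_iota /cz => /andP[_ hk]; rewrite H.
  by rewrite /rootbV Hc /keyV /cz !H.
by rewrite -(gen_sum _ _ _ _ 8 [::]).
Qed.

Definition Kconc : seq key4 := [:: (0, 0, 0, 0); (-2, 0, 0, 0); (-2, 0, 0, 0); (-2, 0, 0, 0); (0, -2, 0, 0); (0, 0, -2, 0); (0, 0, 0, -2); (0, 0, 0, 2); (0, 0, 2, 0); (0, 2, 0, 0); (2, 0, 0, 0); (2, 0, 0, 0); (2, 0, 0, 0); (0, 0, 0, 0); (-3, -1, -1, -1); (-3, -1, 1, 1); (-3, 1, -1, 1); (-3, 1, 1, -1); (-1, -1, -1, 1); (-1, -1, 1, -1); (-1, 1, -1, -1); (-1, 1, 1, 1); (-1, -1, -1, 1); (-1, -1, 1, -1); (-1, 1, -1, -1); (-1, 1, 1, 1); (1, -1, -1, -1); (1, -1, 1, 1); (1, 1, -1, 1); (1, 1, 1, -1); (-1, -1, -1, 1); (-1, -1, 1, -1); (-1, 1, -1, -1); (-1, 1, 1, 1); (1, -1, -1, -1); (1, -1, 1, 1); (1, 1, -1, 1); (1, 1, 1, -1); (1,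 -1, -1, -1); (1, -1, 1, 1); (1, 1, -1, 1); (1, 1, 1, -1); (3, -1, -1, 1); (3, -1, 1, -1); (3, 1, -1, -1); (3, 1, 1, 1); (-3, -1, -1, 1); (-3, -1, 1, -1); (-3, 1, -1, -1); (-3, 1, 1, 1); (-1, -1, -1, -1); (-1, -1, 1, 1); (-1, 1, -1, 1); (-1, 1, 1, -1); (-1, -1, -1, -1); (-1, -1, 1, 1); (-1, 1, -1, 1); (-1, 1, 1, -1); (1, -1, -1, 1); (1, -1, 1, -1); (1, 1, -1, -1); (1, 1, 1, 1); (-1, -1, -1, -1); (-1, -1, 1, 1); (-1, 1, -1, 1); (-1, 1, 1, -1); (1, -1, -1, 1); (1, -1, 1, -1); (1, 1, -1, -1); (1, 1, 1, 1); (1, -1, -1, 1); (1, -1, 1, -1); (1, 1, -1, -1); (1, 1, 1, 1); (3, -1, -1, -1); (3, -1, 1, 1); (3, 1, -1, 1); (3, 1, 1, -1); (-2, 0, 0, 0); (-2, 0, 0, 0); (-2, 0, 0, 0); (0, -2, 0, 0); (0, 0, -2, 0); (0, 0, 0, -2); (0, 0, 0, 2); (0, 0, 2, 0); (0, 2, 0, 0); (2, 0, 0, 0); (2, 0, 0, 0); (2, 0, 0, 0); (-4, 0, 0, 0); (-4, 0, 0, 0); (-2, -2, 0, 0); (-2, 0, -2, 0); (-2, 0, 0, -2); (-2, 0, 0, 2); (-2, 0, 2, 0); (-2, 2, 0, 0); (0, 0, 0, 0); (0, 0, 0, 0); (-4, 0, 0, 0); (-2, -2, 0, 0); (-2, 0,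 -2, 0); (-2, 0, 0, -2); (-2, 0, 0, 2); (-2, 0, 2, 0); (-2, 2, 0, 0); (0, 0, 0, 0); (-2, -2, 0, 0); (-2, 0, -2, 0); (-2, 0, 0, -2); (-2, 0, 0, 2); (-2, 0, 2, 0); (-2, 2, 0, 0); (0, -2, -2, 0); (0, -2, 0, -2); (0, -2, 0, 2); (0, -2, 2, 0); (0, 0, -2, -2); (0, 0, -2, 2); (0, 0, 2, -2); (0, 0, 2, 2); (0, 2, -2, 0); (0, 2, 0, -2); (0, 2, 0, 2); (0, 2, 2, 0); (2, -2, 0, 0); (2, 0, -2, 0); (2, 0, 0, -2); (2, 0, 0, 2); (2, 0, 2, 0); (2, 2, 0, 0); (0, 0, 0, 0); (2, -2, 0, 0); (2, 0, -2, 0); (2, 0, 0, -2); (2, 0, 0, 2); (2, 0, 2, 0); (2, 2, 0, 0); (4, 0, 0, 0); (0, 0, 0, 0); (0, 0, 0, 0); (2, -2, 0, 0); (2, 0, -2, 0); (2, 0, 0, -2); (2, 0, 0, 2); (2, 0, 2, 0); (2, 2, 0, 0); (4, 0, 0, 0); (4, 0, 0, 0); (-2, 0, 0, 0); (-2, 0, 0, 0); (-2, 0, 0, 0); (0, -2, 0, 0); (0, 0, -2, 0); (0, 0, 0, -2); (0, 0, 0, 2); (0, 0, 2, 0); (0, 2, 0, 0); (2, 0, 0, 0); (2, 0, 0, 0); (2, 0, 0, 0); (-3, -1, -1, 1); (-3, -1, 1, -1); (-3, 1, -1, -1); (-3, 1, 1, 1); (-1, -1, -1, -1); (-1, -1,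 1, 1); (-1, 1, -1, 1); (-1, 1, 1, -1); (-1, -1, -1, -1); (-1, -1, 1, 1); (-1, 1, -1, 1); (-1, 1, 1, -1); (1, -1, -1, 1); (1, -1, 1, -1); (1, 1, -1, -1); (1, 1, 1, 1); (-1, -1, -1, -1); (-1, -1, 1, 1); (-1, 1, -1, 1); (-1, 1, 1, -1); (1, -1, -1, 1); (1, -1, 1, -1); (1, 1, -1, -1); (1, 1, 1, 1); (1, -1, -1, 1); (1, -1, 1, -1); (1, 1, -1, -1); (1, 1, 1, 1); (3, -1, -1, -1); (3, -1, 1, 1); (3, 1, -1, 1); (3, 1, 1, -1); (-3, -1, -1, -1); (-3, -1, 1, 1); (-3, 1, -1, 1); (-3, 1, 1, -1); (-1, -1, -1, 1); (-1, -1, 1, -1); (-1, 1, -1, -1); (-1, 1, 1, 1); (-1, -1, -1, 1); (-1, -1, 1, -1); (-1, 1, -1, -1); (-1, 1, 1, 1); (1, -1, -1, -1); (1, -1, 1, 1); (1, 1, -1, 1); (1, 1, 1, -1); (-1, -1, -1, 1); (-1, -1, 1, -1); (-1, 1, -1, -1); (-1, 1, 1, 1); (1, -1, -1, -1); (1, -1, 1, 1); (1, 1, -1, 1); (1, 1, 1, -1); (1, -1, -1, -1); (1, -1, 1, 1); (1, 1, -1, 1); (1, 1, 1, -1); (3, -1, -1, 1); (3, -1, 1, -1); (3, 1, -1, -1); (3, 1, 1, 1); (0, 0, 0, 0); (-2, 0, 0, 0); (-2, 0, 0, 0); (-2, 0, 0, 0); (0, -2, 0, 0); (0, 0, -2,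 0); (0, 0, 0, -2); (0, 0, 0, 2); (0, 0, 2, 0); (0, 2, 0, 0); (2, 0, 0, 0); (2, 0, 0, 0); (2, 0, 0, 0); (0, 0, 0, 0)]%Z.

Lemma gen8E : gen 8 [::] = Kconc.
Proof. vm_compute. reflexivity. Qed.

Definition int_key (t : key4) : bool := (2 %| t.1.1.2)%Z && (t != (0, 0, 0, 0)).
Definition Kint := [seq t <- Kconc | int_key t].
Definition Sl : seq (bool * bool * bool) :=
  [:: (false,false,false); (false,false,true); (false,true,false); (false,true,true);
      (true,false,false); (true,false,true); (true,true,false); (true,true,true)].
Definition keyA (k : int) (s : bool * bool * bool) : key4 :=
  (k, - sgnb s.1.1, - sgnb s.1.2, - sgnb s.2).
Definition keyB (k : int) (s : bool * bool * bool) : key4 :=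
  (- k, sgnb s.1.1, sgnb s.1.2, sgnb s.2).
Definition Kk (k : int) := map (keyA k) Sl ++ map (keyB k) Sl.
Definition Kstruct := nseq 10 (0, 0, 0, 0) ++ Kint ++ flatten (nseq 6 (Kk 1)) ++ flatten (nseq 2 (Kk 3)).

Lemma perm_K : perm_eq Kconc Kstruct.
Proof. vm_compute. reflexivity. Qed.

Definition Kded : seq key4 :=
 [:: (-4, 0, 0, 0); (-2, -2, 0, 0); (-2, 0, -2, 0); (-2, 0, 0, -2);
     (-2, 0, 0, 2); (-2, 0, 2, 0); (-2, 2, 0, 0); (0, -2, -2, 0);
     (0, -2, 0, -2); (0, -2, 0, 2); (0, -2, 2, 0); (0, 0, -2, -2);
     (0, 0, -2, 2); (0, 0, 2, -2); (0, 0, 2, 2); (0, 2, -2, 0);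
     (0, 2, 0, -2); (0, 2, 0, 2); (0, 2, 2, 0); (2, -2, 0, 0);
     (2, 0, -2, 0); (2, 0, 0, -2); (2, 0, 0, 2); (2, 0, 2, 0);
     (2, 2, 0, 0); (4, 0, 0, 0);
     (-2, 0, 0, 0); (0, -2, 0, 0); (0, 0, -2, 0); (0, 0, 0, -2);
     (0, 0, 0, 2); (0, 0, 2, 0); (0, 2, 0, 0); (2, 0, 0, 0)]%Z.

Lemma undup_Kint : undup Kint = Kded.
Proof. vm_compute. reflexivity. Qed.

Lemma sum_nseq (T : Type) (n : nat) (t : T) (F : T -> nat) :
  (\sum_(x <- nseq n t) F x = n * F t)%N.
Proof. by elim: n => [|n IH]; rewrite ?big_nil //= big_cons IH mulSn. Qed.

Lemma sum_flat_nseq (T : Type) (n : nat) (s : seq T) (F : T -> nat) :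
  (\sum_(x <- flatten (nseq n s)) F x = n * \sum_(x <- s) F x)%N.
Proof. by elim: n => [|n IH]; rewrite ?big_nil //= big_cat IH mulSn. Qed.

Lemma PkeyA m5 m6 m7 m8 k s : Pm m5 m6 m7 m8 (keyA k s) = sign_rel k m5 m6 m7 m8 s.
Proof.
rewrite /Pm /sign_rel /=.
transitivity (k * m5 - (sgnb s.1.1 * m6 + sgnb s.1.2 * m7 + sgnb s.2 * m8) == 0).
  by congr (_ == 0); ring.
by rewrite subr_eq0.
Qed.

Lemma PkeyB m5 m6 m7 m8 k s : Pm m5 m6 m7 m8 (keyB k s) = sign_rel k m5 m6 m7 m8 s.
Proof.
rewrite /Pm /sign_rel /=.
transitivity (- (k * m5 - (sgnb s.1.1 * m6 + sgnb s.1.2 * m7 + sgnb s.2 * m8)) == 0).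
  by congr (_ == 0); ring.
by rewrite oppr_eq0 subr_eq0.
Qed.

Definition Rs (k m5 m6 m7 m8 : int) := (\sum_(s <- Sl) (sign_rel k m5 m6 m7 m8 s : nat))%N.
Definition Is (m5 m6 m7 m8 : int) := (\sum_(t <- Kint) (Pm m5 m6 m7 m8 t : nat))%N.

Lemma sum_Kk m5 m6 m7 m8 k :
  (\sum_(t <- Kk k) (Pm m5 m6 m7 m8 t : nat) = Rs k m5 m6 m7 m8 + Rs k m5 m6 m7 m8)%N.
Proof.
rewrite /Kk big_cat !big_map /Rs.
by congr (_ + _)%N; apply: eq_bigr => s _; rewrite ?PkeyA ?PkeyB.
Qed.

Lemma count_formula m5 m6 m7 m8 :
  num_orth_roots (lvec m5 m6 m7 m8) =
  (10 + Is m5 m6 m7 m8 + 6 * (Rs 1 m5 m6 m7 m8 + Rs 1 m5 m6 m7 m8)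
      + 2 * (Rs 3 m5 m6 m7 m8 + Rs 3 m5 m6 m7 m8))%N.
Proof.
rewrite count_eq gen8E (perm_big _ perm_K) /Kstruct.
rewrite [flatten (nseq 6 _)]lock [flatten (nseq 2 _)]lock !big_cat -!lock sum_nseq.
rewrite !(sum_flat_nseq _ _ _ (fun t => (Pm m5 m6 m7 m8 t : nat))) !sum_Kk.
have -> : Pm m5 m6 m7 m8 (0, 0, 0, 0) = true by rewrite /Pm /= !mul0r !addr0.
change (10 * true + (Is m5 m6 m7 m8 + (6 * (Rs 1 m5 m6 m7 m8 + Rs 1 m5 m6 m7 m8) + 2 * (Rs 3 m5 m6 m7 m8 + Rs 3 m5 m6 m7 m8))) = 10 + Is m5 m6 m7 m8 + 6 * (Rs 1 m5 m6 m7 m8 + Rs 1 m5 m6 m7 m8) + 2 * (Rs 3 m5 m6 m7 m8 + Rs 3 m5 m6 m7 m8))%N.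
by rewrite !addnA.
Qed.

Lemma sum0_all (T : Type) (s : seq T) (f : T -> bool) :
  (\sum_(x <- s) (f x : nat) = 0)%N <-> all (fun x => ~~ f x) s.
Proof.
elim: s => [|a s IH]; rewrite ?big_nil ?big_cons //=.
by case: (f a) => /=; [split | rewrite add0n].
Qed.

Lemma R_cond k m5 m6 m7 m8 : Rs k m5 m6 m7 m8 = 0%N <-> cond_ii k m5 m6 m7 m8.
Proof.
rewrite /Rs sum0_all /cond_ii; split => [H s|H]; last by apply/allP => s _; apply: H.
by move/allP: H; apply; case: s => [[[] []] []].
Qed.

Lemma card_R3 m5 m6 m7 m8 :
  #|[set s | sign_rel 3 m5 m6 m7 m8 s]| = Rs 3 m5 m6 m7 m8.
Proof.
have HpS : perm_eq (index_enum (bool * bool * bool)%type) Sl.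
  apply: uniq_perm => //; first exact: index_enum_uniq.
  by move=> s; rewrite mem_index_enum; case: s => [[[] []] []].
rewrite -sum1_card big_mkcond (perm_big _ HpS) /Rs.
by apply: eq_bigr => s _; rewrite inE; case: sign_rel.
Qed.

Ltac by_one := match goal with
  H : is_true (~~ (_ == _)) |- _ =>
    let K := fresh in have K := H; clear - K; move: K; lia end.

Ltac split_hyps := repeat match goal with
  H : is_true (_ && _) |- _ => let H1 := fresh in let H2 := fresh in case/andP: H => H1 H2 end.

Lemma I_cond m5 m6 m7 m8 : Is m5 m6 m7 m8 = 0%N <-> cond_i m5 m6 m7 m8.
Proof.
rewrite /Is sum0_all -all_undup undup_Kint /cond_i /Pm /=.
split => H; split_hyps; repeat (apply/andP; split); by_one.
Qed.

Theorem proposition7p8 (m5 m6 m7 m8 : int) :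
  (2 %| m5 + m6 + m7 + m8)%Z ->
  (num_orth_roots (lvec m5 m6 m7 m8) = 10%N <->
     cond_i m5 m6 m7 m8 /\ cond_ii 1 m5 m6 m7 m8 /\ cond_ii 3 m5 m6 m7 m8)
  /\
  (cond_i m5 m6 m7 m8 -> cond_ii 1 m5 m6 m7 m8 ->
   #|[set s : bool * bool * bool | sign_rel 3 m5 m6 m7 m8 s]| = 1%N ->
   num_orth_roots (lvec m5 m6 m7 m8) = 14%N).
Proof.
move=> _; rewrite count_formula card_R3.
have [HI HI'] := I_cond m5 m6 m7 m8.
have [H1 H1'] := R_cond 1 m5 m6 m7 m8.
have [H3 H3'] := R_cond 3 m5 m6 m7 m8.
split.
  split => [H|[Hi [C1 C3]]].
    split; [apply: HI | split; [apply: H1 | apply: H3]]; lia.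
  by rewrite HI' // H1' // H3'.
by move=> Hi C1 ->; rewrite HI' // H1'.
Qed.
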